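(* Fix $g\ge1$ and $0\le g'<g$, $g''=g-g'$. Equip $\mathbb{P}_{g'}\backslash\mathfrak{S}_g$ with the Weil–Petersson metric $g_{WP}$ and $A_{g'}\times\mathcal{T}^{>0}_{g''}$ with the product metric $g'_{WP}+g''_{trWP}$. Then the projection $\pi_{g'}:\mathbb{P}_{g'}\backslash\mathfrak{S}_g\to A_{g'}\times\mathcal{T}^{>0}_{g''}$ is a Riemannian submersion; in particular it is $1$-Lipschitz.
   Context: $\mathfrak{S}_g=\{\tau\in\mathrm{Sym}(g,\mathbb{C}):\operatorname{Im}\tau>0\}$, $\tau=X+iY$, with $\mathrm{Sp}(2g,\mathbb{R})$ acting by $\begin{pmatrix}A&B\\C&D\end{pmatrix}\cdot\tau=(A\tau+B)(C\tau+D)^{-1}$; $\Gamma=\mathrm{Sp}(2g,\mathbb{Z})/\{\pm1\}$. The Weil–Petersson metric $g_{WP}$ is the invariant metric with $\|V\|_\tau^2=\frac12\big(\operatorname{tr}(Y^{-1}V_XY^{-1}V_X)+\operatorname{tr}(Y^{-1}V_YY^{-1}V_Y)\big)$ for $V=V_X+iV_Y\in\mathrm{Sym}(g,\mathbb{C})\cong T_\tau\mathfrak{S}_g$ (Kähler form $\frac{i}{4}\operatorname{tr}(Y^{-1}d\tau Y^{-1}d\bar\tau)$); $g'_{WP}$ is the same metric on $\mathfrak{S}_{g'}$ and on $A_{g'}=\mathrm{Sp}(2g',\mathbb{Z})\backslash\mathfrak{S}_{g'}$. Block decomposition $\tau=\begin{pmatrix}\tau'&\tau'''\\{}^t\tau'''&\tau''\end{pmatrix}$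 with $\tau'$ of size $g'\times g'$, similarly for $X,Y$. $P_{g'}\subset\mathrm{Sp}(2g,\mathbb{R})$ is the parabolic subgroup of matrices $\begin{pmatrix}A'&0&B'&*\\ *&u&*&*\\ C'&0&D'&*\\0&0&0&(u^t)^{-1}\end{pmatrix}$ with $\begin{pmatrix}A'&B'\\C'&D'\end{pmatrix}\in\mathrm{Sp}(2g',\mathbb{R})$, $u\in\mathrm{GL}(g'',\mathbb{R})$ (the normalizer of the flag $\langle e_{g'+1},\dots,e_g\rangle\subset\langle e_{g'+1},\dots,e_g\rangle^\perp$), and $\mathbb{P}_{g'}=\Gamma\cap P_{g'}$. The map $\pi_{g'}(\tau)=(\tau',\,Y''-{}^tY'''(Y')^{-1}Y''')$ from $\mathfrak{S}_g$ to $\mathfrak{S}_{g'}\times\mathrm{Sym}^+(g'',\mathbb{R})$ induces the projection $\mathbb{P}_{g'}\backslash\mathfrak{S}_g\to A_{g'}\times\mathcal{T}^{>0}_{g''}$, where $\mathcal{T}^{>0}_{g''}=\mathrm{GL}(g'',\mathbb{Z})\backslash\mathrm{Sym}^+(g'',\mathbb{R})$ (action $t\mapsto ata^t$) with metric $g''_{trWP}=\frac12\operatorname{tr}(t^{-1}dt\,t^{-1}dt)$. *)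

(* Defs.v *)
From HB Require Import structures.
From mathcomp Require Import all_boot all_order all_algebra.
From mathcomp Require Import all_classical all_reals all_analysis.
Set Implicit Arguments. Unset Strict Implicit. Unset Printing Implicit Defensive.
Import Order.TTheory GRing.Theory Num.Theory.
Import numFieldNormedType.Exports.
Local Open Scope ring_scope.

Section Defs.
Variable R : realType.

Definition symmx (n : nat) (A : 'M[R]_n) : Prop := A^T = A.

Definition posdefmx (n : nat) (A : 'M[R]_n) : Prop :=
  symmx A /\ forall v : 'cV[R]_n, v != 0 -> 0 < (v^T *m A *m v) 0 0.

(* tau = X + i Y lies in the Siegel upper half space S_n *)
Definition siegel (n : nat) (X Y : 'M[R]_n) : Prop := symmx X /\ posdefmx Y.

Variables g' g'' : nat.

(* second component of pi_{g'}: Y'' - ^tY''' (Y')^{-1} Y''' ;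
   Y' = ulsubmx Y (g' x g'), Y''' = ursubmx Y (g' x g''), Y'' = drsubmx Y *)
Definition pi2 (Y : 'M[R]_(g' + g'')) : 'M[R]_g'' :=
  drsubmx Y - (ursubmx Y)^T *m invmx (ulsubmx Y) *m ursubmx Y.

(* pi_{g'}(tau) = (tau', pi2 Y), with tau' = X' + i Y' recorded as (X', Y') *)
Definition pi_X (X Y : 'M[R]_(g' + g'')) : 'M[R]_g' := ulsubmx X.
Definition pi_Y (X Y : 'M[R]_(g' + g'')) : 'M[R]_g' := ulsubmx Y.
Definition pi_T (X Y : 'M[R]_(g' + g'')) : 'M[R]_g'' := pi2 Y.

Definition curveX (X VX : 'M[R]_(g' + g'')) (t : R) := X + t *: VX.

Definition dpi_derivable (X Y VX VY : 'M[R]_(g' + g'')) : Prop :=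
  [/\ derivable (fun t : R => pi_X (curveX X VX t) (curveX Y VY t)) 0 1,
      derivable (fun t : R => pi_Y (curveX X VX t) (curveX Y VY t)) 0 1 &
      derivable (fun t : R => pi_T (curveX X VX t) (curveX Y VY t)) 0 1].

Definition dpi_X (X Y VX VY : 'M[R]_(g' + g'')) : 'M[R]_g' :=
  derive1 (fun t : R => pi_X (curveX X VX t) (curveX Y VY t)) 0.
Definition dpi_Y (X Y VX VY : 'M[R]_(g' + g'')) : 'M[R]_g' :=
  derive1 (fun t : R => pi_Y (curveX X VX t) (curveX Y VY t)) 0.
Definition dpi_T (X Y VX VY : 'M[R]_(g' + g'')) : 'M[R]_g'' :=
  derive1 (fun t : R => pi_T (curveX X VX t) (curveX Y VY t)) 0.

End Defs.

(* Weil-Petersson inner product at tau = X + iY on S_n, polarization of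
   ||V||^2 = 1/2 (tr(Y^-1 V_X Y^-1 V_X) + tr(Y^-1 V_Y Y^-1 V_Y)) *)
Definition wp_inner (R : realType) (n : nat) (Y VX VY WX WY : 'M[R]_n) : R :=
  2^-1 * (\tr (invmx Y *m VX *m invmx Y *m WX) + \tr (invmx Y *m VY *m invmx Y *m WY)).

Definition trwp_inner (R : realType) (n : nat) (T A B : 'M[R]_n) : R :=
  2^-1 * \tr (invmx T *m A *m invmx T *m B).

Definition dpi_sqnorm (R : realType) (g' g'' : nat) (X Y VX VY : 'M[R]_(g' + g'')) : R :=
  wp_inner (ulsubmx Y) (dpi_X X Y VX VY) (dpi_Y X Y VX VY)
                       (dpi_X X Y VX VY) (dpi_Y X Y VX VY)
  + trwp_inner (pi2 Y) (dpi_T X Y VX VY) (dpi_T X Y VX VY).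

(* pi_{g'} is a Riemannian submersion at tau = X + iY:
   differentiable, with surjective differential onto
   T(S_{g'} x Sym^+(g'')) = Sym(g',C) x Sym(g'',R), which is isometric on the
   g_WP-orthogonal complement (horizontal space) of its kernel.
   The last conjunct (contraction of all tangent vectors) is the infinitesimal
   form of the 1-Lipschitz property. *)
Definition pi_riemannian_submersion_at (R : realType) (g' g'' : nat)
  (X Y : 'M[R]_(g' + g'')) : Prop :=
  [/\ (forall VX VY : 'M[R]_(g' + g''), symmx VX -> symmx VY ->
         dpi_derivable X Y VX VY),
      (forall (WX WY : 'M[R]_g') (WT : 'M[R]_g''),
         symmx WX -> symmx WY -> symmx WT ->
         exists VX VY : 'M[R]_(g' + g''), [/\ symmx VX, symmx VY,
           dpi_X X Y VX VY = WX, dpi_Y X Y VX VY = WY & dpi_T X Y VX VY = WT]),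
      (forall VX VY : 'M[R]_(g' + g''), symmx VX -> symmx VY ->
         (forall WX WY : 'M[R]_(g' + g''), symmx WX -> symmx WY ->
            dpi_X X Y WX WY = 0 -> dpi_Y X Y WX WY = 0 -> dpi_T X Y WX WY = 0 ->
            wp_inner Y VX VY WX WY = 0) ->
         dpi_sqnorm X Y VX VY = wp_inner Y VX VY VX VY) &
      (forall VX VY : 'M[R]_(g' + g''), symmx VX -> symmx VY ->
         dpi_sqnorm X Y VX VY <= wp_inner Y VX VY VX VY)].

(* Main.v *)
Require Import Defs.
From HB Require Import structures.
From mathcomp Require Import all_boot all_order all_algebra.
From mathcomp Require Import all_classical all_reals all_analysis.
Set Implicit Arguments. Unset Strict Implicit. Unset Printing Implicit Defensive.
Import Order.TTheory GRing.Theory Num.Theory.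
Import numFieldNormedType.Exports.
Local Open Scope ring_scope.

Section Calc.
Variable R : realType.

Lemma mx_derive m n (f : R -> 'M[R]_(m, n)) (x v : R) (D : 'M[R]_(m, n)) :
  (forall i j, is_derive x v (fun t => f t i j) (D i j)) -> is_derive x v f D.
Proof.
move=> H.
have df : derivable f x v by apply/derivable_mxP => i j; exact: (@ex_derive _ _ _ _ _ _ _ (H i j)).
apply: DeriveDef => //; rewrite derive_mx //; apply/matrixP => i j; rewrite mxE.
exact: (@derive_val _ _ _ _ _ _ _ (H i j)).
Qed.

Lemma sc_affine (a b x v : R) : is_derive x v (fun t : R => a + t * b) (v * b).
Proof.
have h1 : is_derive x v (fun t : R => t * b) (v * b).
  apply: DeriveDef; first by apply: derivableM; [exact: derivable_id| exact: derivable_cst].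
  rewrite (deriveM (f := id) (g := cst b)); [|exact: derivable_id|exact: derivable_cst].
  rewrite derive_cst derive_id scaler0 add0r /=; exact: mulrC.
have := is_deriveD (is_derive_cst a x v) h1.
by rewrite add0r.
Qed.

Lemma is_derive_affine m n (C M : 'M[R]_(m, n)) (x v : R) :
  is_derive x v (fun t : R => C + t *: M) (v *: M).
Proof.
apply: mx_derive => i j.
have -> : (fun t => (C + t *: M) i j) = (fun t => C i j + t * M i j).
  by apply/funext => t; rewrite !mxE.
by rewrite mxE; apply: sc_affine.
Qed.

Lemma is_derive_mulmx m n k (f : R -> 'M[R]_(m, n)) (g : R -> 'M[R]_(n, k))
   (x v : R) (Df : 'M[R]_(m, n)) (Dg : 'M[R]_(n, k)) :
  is_derive x v f Df -> is_derive x v g Dg ->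
  is_derive x v (fun t => f t *m g t) (Df *m g x + f x *m Dg).
Proof.
move=> hf hg; apply: mx_derive => i j.
have -> : (fun t => (f t *m g t) i j) =
   \sum_(l < n) ((fun t => f t i l) * (fun t => g t l j)).
  by apply/funext => t; rewrite mxE fct_sumE.
have hfe : forall l, is_derive x v (fun t => f t i l) (Df i l).
  move=> l; apply: DeriveDef.
    by move: (@ex_derive _ _ _ _ _ _ _ hf) => /derivable_mxP; apply.
  by rewrite -[Df]derive_val derive_mx ?mxE //; exact: ex_derive.
have hge : forall l, is_derive x v (fun t => g t l j) (Dg l j).
  move=> l; apply: DeriveDef.
    by move: (@ex_derive _ _ _ _ _ _ _ hg) => /derivable_mxP; apply.
  by rewrite -[Dg]derive_val derive_mx ?mxE //; exact: ex_derive.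
apply: (is_derive_eq (is_derive_sum (fun l => is_deriveM (hfe l) (hge l)))).
rewrite !mxE -big_split /=; apply: eq_bigr => l _.
by rewrite addrC /GRing.scale /= mulrC [g x l j * _]mulrC.
Qed.

Lemma is_derive_invmx n (A A1 : 'M[R]_n) : A \in unitmx ->
  is_derive (0:R) (1:R) (fun t => invmx (A + t *: A1)) (- (invmx A *m A1 *m invmx A)).
Proof.
move=> uA.
pose P : 'M[{poly R}]_n := \matrix_(i, j) ((A i j)%:P + (A1 i j) *: 'X).
have hP t : map_mx (horner_eval t) P = A + t *: A1.
  by apply/matrixP => i j; rewrite !mxE /= ?horner_evalE hornerD hornerC hornerZ hornerX mulrC.
have hdet t : \det (A + t *: A1) = (\det P).[t].
  by rewrite -hP det_map_mx ?horner_evalE.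
have hadj t i j : \adj (A + t *: A1) i j = (\adj P i j).[t].
  by rewrite -hP -map_mx_adj mxE ?horner_evalE.
have d0 : (\det P).[0] != 0.
  by rewrite -hdet scale0r addr0 -unitfE -unitmxE.
have nd : \forall t \near (0:R), (\det P).[t] != 0.
  exact: (cvgr_neq0 _ (@continuous_horner _ (\det P) 0) d0).
pose G t : 'M[R]_n := \matrix_(i, j) (((\det P).[t])^-1 * (\adj P i j).[t]).
have eGF : {near (0:R), G =1 (fun t => invmx (A + t *: A1))}.
  near=> t; have dt : (\det P).[t] != 0 by near: t.
  rewrite /invmx unitmxE unitfE hdet dt; apply/matrixP => i j.
  by rewrite /G [LHS]mxE [RHS]mxE hadj.
have dG : derivable G 0 1.
  apply/derivable_mxP => i j.
  have h := is_deriveM (is_deriveV d0 (is_derive_poly (\det P) 0))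
                       (is_derive_poly (\adj P i j) 0).
  have -> : (fun x => G x i j) =
     ((fun y => (horner (\det P) y)^-1) * horner (\adj P i j)).
    by apply/funext => t; rewrite mxE.
  exact: (@ex_derive _ _ _ _ _ _ _ h).
have dF := near_eq_derivable eGF dG.
have hMF := is_derive_mulmx (is_derive_affine A A1 0 1) (derivableP dF).
have e1 : \forall t \near (0:R), (A + t *: A1) *m invmx (A + t *: A1) = 1%:M.
  near=> t; have dt : (\det P).[t] != 0 by near: t.
  by rewrite mulmxV // unitmxE unitfE hdet.
have D0 := @near_eq_derive R R 'M[R]_n (fun t => (A + t *: A1) *m invmx (A + t *: A1)) (fun=> 1%:M) 0 1 e1.
rewrite (@derive_val _ _ _ _ _ _ _ hMF) derive_cst scale1r scale0r addr0 in D0.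
apply: DeriveDef => //.
set F' := (derive (fun x : R => invmx (A + x *: A1)) 0 1) in D0 *.
rewrite -[F'](mulKmx uA) -[A *m F'](addKr (A1 *m invmx A)) D0 addr0.
by rewrite mulmxN mulmxA.
Unshelve. all: by end_near.
Qed.

End Calc.
Section Alg.
Variable R : realType.

Lemma pd_unit n (A : 'M[R]_n) : posdefmx A -> A \in unitmx.
Proof.
move=> [_ pA]; rewrite unitmxE unitfE; apply/negP => /det0P [v vn0 vA].
have : v^T != 0 by rewrite -(inj_eq (@trmx_inj _ _ _)) trmxK trmx0.
move=> /pA; rewrite trmxK vA mul0mx mxE ltxx //.
Qed.

Lemma trmxN' m n (M : 'M[R]_(m, n)) : (- M)^T = - M^T.
Proof. by apply/matrixP => i j; rewrite !mxE. Qed.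

Lemma symmx_inv n (A : 'M[R]_n) : symmx A -> symmx (invmx A).
Proof. by rewrite /symmx trmx_inv => ->. Qed.

Lemma quad_block p q (Y : 'M[R]_(p + q)) (v : 'cV_p) (u : 'cV_q) :
  ((col_mx v u)^T *m Y *m col_mx v u) =
  v^T *m ulsubmx Y *m v + v^T *m ursubmx Y *m u + u^T *m dlsubmx Y *m v
  + u^T *m drsubmx Y *m u.
Proof.
rewrite -{1}[Y]submxK tr_col_mx mul_row_block mul_row_col !mulmxDl.
by rewrite !addrA; congr (_ + _); rewrite addrAC.
Qed.

Lemma symmx_blocks p q (Y : 'M[R]_(p + q)) : symmx Y ->
  [/\ symmx (ulsubmx Y), symmx (drsubmx Y) & dlsubmx Y = (ursubmx Y)^T].
Proof.
move=> sY; rewrite /symmx trmx_ulsub trmx_drsub sY; split => //.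
by rewrite trmx_ursub sY.
Qed.

Lemma pd_ul p q (Y : 'M[R]_(p + q)) : posdefmx Y -> posdefmx (ulsubmx Y).
Proof.
move=> [sY pY]; split; first by case: (symmx_blocks sY).
move=> v vn0; have := pY (col_mx v 0).
rewrite quad_block !mulmx0 trmx0 !mul0mx !addr0.
apply; apply: contra vn0 => /eqP.
by rewrite -col_mx0 => /eq_col_mx [-> _].
Qed.

Definition schur p q (Y : 'M[R]_(p + q)) : 'M[R]_q :=
  drsubmx Y - (ursubmx Y)^T *m invmx (ulsubmx Y) *m ursubmx Y.

Lemma schur_pi2 (g1 g2 : nat) (Y : 'M[R]_(g1 + g2)) : pi2 Y = schur Y.
Proof. by []. Qed.

Lemma pd_schur p q (Y : 'M[R]_(p + q)) : posdefmx Y -> posdefmx (schur Y).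
Proof.
move=> pdY; have [sY pY] := pdY.
have [sA sD eC] := symmx_blocks sY.
have uA := pd_unit (pd_ul pdY).
set A := ulsubmx Y in sA uA *; set B := ursubmx Y in eC *.
have sAi : (invmx A)^T = invmx A by rewrite trmx_inv sA.
split.
  rewrite /symmx /schur linearB /= sD !trmx_mul trmxK sAi.
  by rewrite mulmxA.
move=> v vn0.
have w0 : col_mx (- (invmx A *m B *m v)) v != 0.
  apply: contra vn0 => /eqP.
  by rewrite -col_mx0 => /eq_col_mx [_ ->].
have := pY _ w0.
rewrite quad_block eC.
have -> : (- (invmx A *m B *m v))^T *m A *m - (invmx A *m B *m v) =
   v^T *m (B^T *m invmx A *m B) *m v.
  rewrite trmxN' !mulNmx !mulmxN opprK !trmx_mul sAi.
  by rewrite !mulmxA mulmxKV // -!mulmxA.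
have -> : (- (invmx A *m B *m v))^T *m B *m v =
   - (v^T *m (B^T *m invmx A *m B) *m v).
  by rewrite trmxN' !mulNmx !trmx_mul sAi !mulmxA.
have -> : v^T *m B^T *m - (invmx A *m B *m v) =
   - (v^T *m (B^T *m invmx A *m B) *m v).
  by rewrite mulmxN !mulmxA.
rewrite /schur mulmxBr mulmxBl.
suff -> : v^T *m (B^T *m invmx A *m B) *m v + - (v^T *m (B^T *m invmx A *m B) *m v) +
     - (v^T *m (B^T *m invmx A *m B) *m v) + v^T *m drsubmx Y *m v =
     v^T *m drsubmx Y *m v - v^T *m (B^T *m invmx A *m B) *m v by [].
by rewrite subrr add0r addrC.
Qed.

End Alg.
Section Alg2.
Variable R : realType.
Variables p q : nat.
Implicit Types (V W U : 'M[R]_(p + q)).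

Definition Kof (Y : 'M[R]_(p + q)) : 'M[R]_(q, p) :=
  (ursubmx Y)^T *m invmx (ulsubmx Y).
Definition Lm (Y : 'M[R]_(p + q)) : 'M[R]_(p + q) :=
  block_mx 1%:M 0 (Kof Y) 1%:M.
Definition Linv (Y : 'M[R]_(p + q)) : 'M[R]_(p + q) :=
  block_mx 1%:M 0 (- Kof Y) 1%:M.
Definition conjL Y V := Linv Y *m V *m (Linv Y)^T.

Lemma Lm_Linv Y : Lm Y *m Linv Y = 1%:M.
Proof.
rewrite /Lm /Linv mulmx_block !mulmx0 !mul0mx !mul1mx !mulmx1 !addr0 add0r subrr.
by rewrite [RHS](scalar_mx_block p q).
Qed.

Lemma Linv_Lm Y : Linv Y *m Lm Y = 1%:M.
Proof.
rewrite /Lm /Linv mulmx_block !mulmx0 !mul0mx !mul1mx !mulmx1 !addr0 add0r addrC subrr.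
by rewrite [RHS](scalar_mx_block p q).
Qed.

Lemma trLm_Linv Y : (Lm Y)^T *m (Linv Y)^T = 1%:M.
Proof. by rewrite -trmx_mul Linv_Lm trmx1. Qed.

Lemma trLinv_Lm Y : (Linv Y)^T *m (Lm Y)^T = 1%:M.
Proof. by rewrite -trmx_mul Lm_Linv trmx1. Qed.

Lemma conjL_Lm Y U : conjL Y (Lm Y *m U *m (Lm Y)^T) = U.
Proof.
by rewrite /conjL !mulmxA Linv_Lm mul1mx -mulmxA trLm_Linv mulmx1.
Qed.

Lemma Lm_conjL Y V : Lm Y *m conjL Y V *m (Lm Y)^T = V.
Proof.
by rewrite /conjL !mulmxA Lm_Linv mul1mx -mulmxA trLinv_Lm mulmx1.
Qed.

Lemma Y_fact Y : posdefmx Y ->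
  Y = Lm Y *m block_mx (ulsubmx Y) 0 0 (schur Y) *m (Lm Y)^T.
Proof.
move=> pdY; have [sY _] := pdY; have [sA _ eC] := symmx_blocks sY.
have uA := pd_unit (pd_ul pdY).
have sAi : (invmx (ulsubmx Y))^T = invmx (ulsubmx Y) by rewrite trmx_inv sA.
rewrite /Lm tr_block_mx !trmx1 trmx0 !mulmx_block.
rewrite !mulmx0 !mul0mx !mul1mx !mulmx1 !addr0 !add0r.
have KA : Kof Y *m ulsubmx Y = (ursubmx Y)^T by rewrite /Kof mulmxKV.
have AKt : ulsubmx Y *m (Kof Y)^T = ursubmx Y.
  by rewrite /Kof trmx_mul sAi trmxK mulKVmx.
rewrite KA AKt.
have -> : (ursubmx Y)^T *m (Kof Y)^T =
   (ursubmx Y)^T *m invmx (ulsubmx Y) *m ursubmx Y.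
  by rewrite /Kof trmx_mul sAi trmxK mulmxA.
by rewrite /schur addrC subrK -eC submxK.
Qed.

Lemma invY Y : posdefmx Y ->
  invmx Y = (Linv Y)^T *m block_mx (invmx (ulsubmx Y)) 0 0 (invmx (schur Y)) *m Linv Y.
Proof.
move=> pdY; have uY := pd_unit pdY.
have uA := pd_unit (pd_ul pdY); have uS := pd_unit (pd_schur pdY).
set Z := (X in _ = X).
suff YZ : Y *m Z = 1%:M by rewrite -[Z](mulKmx uY) YZ mulmx1.
rewrite {1}(Y_fact pdY) /Z.
rewrite -!mulmxA [X in _ *m (_ *m X)]mulmxA trLm_Linv mul1mx.
rewrite [X in _ *m X]mulmxA mulmx_block !mulmx0 !mul0mx !addr0 !add0r.
by rewrite !mulmxV // -scalar_mx_block mul1mx Lm_Linv.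
Qed.

Lemma tr_conj Y V W : posdefmx Y ->
  \tr (invmx Y *m V *m invmx Y *m W) =
  \tr (block_mx (invmx (ulsubmx Y)) 0 0 (invmx (schur Y)) *m conjL Y V *m
       block_mx (invmx (ulsubmx Y)) 0 0 (invmx (schur Y)) *m conjL Y W).
Proof.
move=> pdY; rewrite invY //; set D := block_mx _ _ _ _.
by rewrite /conjL -!mulmxA [LHS]mxtrace_mulC !mulmxA.
Qed.

End Alg2.
Section Alg3.
Variable R : realType.

Lemma block_trace p q (Ai : 'M[R]_p) (Si : 'M[R]_q) (U W : 'M[R]_(p + q)) :
  \tr (block_mx Ai 0 0 Si *m U *m block_mx Ai 0 0 Si *m W) =
  \tr (Ai *m ulsubmx U *m Ai *m ulsubmx W) + \tr (Ai *m ursubmx U *m Si *m dlsubmx W)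
  + \tr (Si *m dlsubmx U *m Ai *m ursubmx W) + \tr (Si *m drsubmx U *m Si *m drsubmx W).
Proof.
rewrite -[in LHS](submxK U) -[in LHS](submxK W) !mulmx_block.
rewrite !mulmx0 !mul0mx !addr0 !add0r mxtrace_block !mxtraceD.
by rewrite ?mulmxA addrA.
Qed.

Lemma tr_psd m n (P : 'M[R]_m) (Q : 'M[R]_n) (N : 'M[R]_(m, n)) :
  (forall v : 'cV_m, 0 <= (v^T *m P *m v) 0 0) -> posdefmx Q ->
  0 <= \tr (P *m N *m Q *m N^T).
Proof.
move=> psdP; elim: n Q N => [|n IH] Q N pdQ.
  by rewrite (thinmx0 N) mulmx0 !mul0mx mxtrace0.
pose Q' : 'M[R]_(1 + n) := Q.
have pdQ' : posdefmx Q' by [].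
have EQ := Y_fact pdQ'.
have -> : P *m N *m Q *m N^T = P *m (N *m Lm Q') *m
    block_mx (ulsubmx Q') 0 0 (schur Q') *m (N *m Lm Q')^T.
  by rewrite trmx_mul !mulmxA -[_ *m block_mx _ _ _ _]mulmxA -[_ *m (Lm Q')^T]mulmxA -EQ.
set M := N *m Lm Q'.
rewrite -(hsubmxK M) tr_row_mx -(mulmxA P) mul_row_block.
rewrite !mulmx0 !addr0 add0r -mulmxA mul_row_col mulmxDr mxtraceD.
apply: addr_ge0; last first.
  by rewrite !mulmxA; apply: IH; apply: pd_schur.
have pA := pd_ul pdQ'.
rewrite [ulsubmx Q']mx11_scalar mul_mx_scalar -scalemxAl -scalemxAr mxtraceZ.
apply: mulr_ge0.
  have n1 : (1%:M : 'cV[R]_1) != 0.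
    by apply/eqP => /matrixP /(_ 0 0); rewrite !mxE /= => /eqP; rewrite oner_eq0.
  by have := pA.2 _ n1; rewrite trmx1 mul1mx mulmx1 => /ltW.
by rewrite mulmxA mxtrace_mulC mulmxA trace_mx11; apply: psdP.
Qed.

End Alg3.
Lemma ac4 (G : zmodType) (a b c d : G) : - (- a + b) + (- c + d) = d - b - c + a.
Proof. by rewrite opprD opprK addrA [LHS]addrC !addrA (addrAC d a) (addrAC (d - b) a). Qed.

Lemma ac4b (G : zmodType) (a b c d : G) : a + b + c + d = a + d + (b + c).
Proof. by rewrite addrA (addrAC a d b) (addrAC (a + b) d c). Qed.

Section Alg4.
Variable R : realType.

Lemma pd_inv n (A : 'M[R]_n) : posdefmx A -> posdefmx (invmx A).
Proof.
move=> pdA; have uA := pd_unit pdA; have [sA pA] := pdA.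
split; first exact: symmx_inv.
move=> v vn0.
have w0 : invmx A *m v != 0.
  by apply: contra vn0 => /eqP e; rewrite -(mulKVmx uA v) e mulmx0.
have := pA _ w0; rewrite trmx_mul trmx_inv sA.
by rewrite -!mulmxA mulKVmx // mulmxA.
Qed.

Lemma pd_psd n (A : 'M[R]_n) : posdefmx A -> forall v : 'cV_n, 0 <= (v^T *m A *m v) 0 0.
Proof.
move=> [_ pA] v; have [->|vn0] := eqVneq v 0.
  by rewrite mulmx0 mxE.
exact/ltW/pA.
Qed.

Variables p q : nat.
Implicit Types (Y V W U : 'M[R]_(p + q)).

Lemma conjL_sym Y V : symmx V -> symmx (conjL Y V).
Proof. by rewrite /symmx /conjL !trmx_mul trmxK => ->; rewrite mulmxA. Qed.

Lemma Lm_sym Y U : symmx U -> symmx (Lm Y *m U *m (Lm Y)^T).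
Proof. by rewrite /symmx !trmx_mul trmxK => ->; rewrite mulmxA. Qed.

Lemma conjL_blocks Y V :
  conjL Y V = block_mx (ulsubmx V) (ursubmx V - ulsubmx V *m (Kof Y)^T)
    (dlsubmx V - Kof Y *m ulsubmx V)
    (drsubmx V - dlsubmx V *m (Kof Y)^T - Kof Y *m ursubmx V
       + Kof Y *m ulsubmx V *m (Kof Y)^T).
Proof.
rewrite /conjL /Linv -[in LHS](submxK V) tr_block_mx !trmx1 !trmx0 trmxN'.
rewrite !mulmx_block ?mulmx0 ?mul0mx ?mul1mx ?mulmx1 ?addr0 ?add0r.
rewrite ?mulNmx ?mulmxN ?opprK ?mulmxDl ?mulNmx ?mulmxN ?opprK.
by congr block_mx; [rewrite addrC | rewrite addrC | rewrite ac4].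
Qed.

Lemma ul_conjL Y V : ulsubmx (conjL Y V) = ulsubmx V.
Proof. by rewrite conjL_blocks block_mxKul. Qed.

Lemma ul_conjL' Y V : ulsubmx V = ulsubmx (conjL Y V).
Proof. by rewrite ul_conjL. Qed.

Definition kerX Y V : 'M[R]_(p + q) :=
  Lm Y *m block_mx 0 (ursubmx (conjL Y V)) (dlsubmx (conjL Y V)) (drsubmx (conjL Y V))
     *m (Lm Y)^T.
Definition kerY Y V : 'M[R]_(p + q) :=
  Lm Y *m block_mx 0 (ursubmx (conjL Y V)) (dlsubmx (conjL Y V)) 0 *m (Lm Y)^T.

Definition tt Y V W := \tr (invmx Y *m V *m invmx Y *m W).

Lemma tt_blocks Y V W : posdefmx Y ->
  tt Y V W =
  \tr (invmx (ulsubmx Y) *m ulsubmx (conjL Y V) *m invmx (ulsubmx Y) *m ulsubmx (conjL Y W))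
  + \tr (invmx (ulsubmx Y) *m ursubmx (conjL Y V) *m invmx (schur Y) *m dlsubmx (conjL Y W))
  + \tr (invmx (schur Y) *m dlsubmx (conjL Y V) *m invmx (ulsubmx Y) *m ursubmx (conjL Y W))
  + \tr (invmx (schur Y) *m drsubmx (conjL Y V) *m invmx (schur Y) *m drsubmx (conjL Y W)).
Proof. by move=> pdY; rewrite /tt tr_conj // block_trace. Qed.

Lemma ttX Y V : posdefmx Y ->
  tt Y V V = \tr (invmx (ulsubmx Y) *m ulsubmx V *m invmx (ulsubmx Y) *m ulsubmx V)
             + tt Y V (kerX Y V).
Proof.
move=> pdY; rewrite !tt_blocks // /kerX conjL_Lm.
rewrite block_mxKul block_mxKur block_mxKdl block_mxKdr mulmx0 mxtrace0 add0r.
by rewrite !ul_conjL !addrA.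
Qed.

Lemma ttY Y V : posdefmx Y ->
  tt Y V V = \tr (invmx (ulsubmx Y) *m ulsubmx V *m invmx (ulsubmx Y) *m ulsubmx V)
   + \tr (invmx (schur Y) *m drsubmx (conjL Y V) *m invmx (schur Y) *m drsubmx (conjL Y V))
   + tt Y V (kerY Y V).
Proof.
move=> pdY; rewrite !tt_blocks // /kerY conjL_Lm.
rewrite block_mxKul block_mxKur block_mxKdl block_mxKdr !mulmx0 !mxtrace0 add0r addr0.
by rewrite !ul_conjL ac4b.
Qed.

Lemma ttX_ge0 Y V : posdefmx Y -> symmx V -> 0 <= tt Y V (kerX Y V).
Proof.
move=> pdY sV; rewrite tt_blocks // /kerX conjL_Lm.
rewrite block_mxKul block_mxKur block_mxKdl block_mxKdr mulmx0 mxtrace0 add0r.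
have [_ sD eC] := symmx_blocks (conjL_sym Y sV).
have pA := pd_inv (pd_ul pdY); have pS := pd_inv (pd_schur pdY).
rewrite eC; apply: addr_ge0; first apply: addr_ge0.
- exact: tr_psd (pd_psd pA) pS.
- by rewrite -{2}(trmxK (ursubmx _)); apply: tr_psd (pd_psd pS) pA.
- by rewrite -{2}sD; apply: tr_psd (pd_psd pS) pS.
Qed.

Lemma ttY_ge0 Y V : posdefmx Y -> symmx V -> 0 <= tt Y V (kerY Y V).
Proof.
move=> pdY sV; rewrite tt_blocks // /kerY conjL_Lm.
rewrite block_mxKul block_mxKur block_mxKdl block_mxKdr !mulmx0 !mxtrace0 add0r addr0.
have [_ sD eC] := symmx_blocks (conjL_sym Y sV).
have pA := pd_inv (pd_ul pdY); have pS := pd_inv (pd_schur pdY).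
rewrite eC; apply: addr_ge0.
- exact: tr_psd (pd_psd pA) pS.
- by rewrite -{2}(trmxK (ursubmx _)); apply: tr_psd (pd_psd pS) pA.
Qed.

Lemma kerX_sym Y V : symmx V -> symmx (kerX Y V).
Proof.
move=> sV; have [_ sD eC] := symmx_blocks (conjL_sym Y sV).
apply: Lm_sym; rewrite /symmx tr_block_mx trmx0 sD eC trmxK //.
Qed.

Lemma kerY_sym Y V : symmx V -> symmx (kerY Y V).
Proof.
move=> sV; have [_ sD eC] := symmx_blocks (conjL_sym Y sV).
apply: Lm_sym; rewrite /symmx tr_block_mx !trmx0 eC trmxK //.
Qed.

Lemma kerX_ul Y V : ulsubmx (kerX Y V) = 0.
Proof. by rewrite (ul_conjL' Y) /kerX conjL_Lm block_mxKul. Qed.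
Lemma kerY_ul Y V : ulsubmx (kerY Y V) = 0.
Proof. by rewrite (ul_conjL' Y) /kerY conjL_Lm block_mxKul. Qed.
Lemma kerY_dr Y V : drsubmx (conjL Y (kerY Y V)) = 0.
Proof. by rewrite /kerY conjL_Lm block_mxKdr. Qed.

End Alg4.
Lemma ac5 (G : zmodType) (a b c d : G) : d - (a + - c + b) = d - a - b + c.
Proof. by rewrite !opprD opprK !addrA (addrAC (d - a) c). Qed.

Section Main.
Variable R : realType.
Variables p q : nat.

Lemma ul_aff (M N : 'M[R]_(p + q)) (t : R) : ulsubmx (M + t *: N) = ulsubmx M + t *: ulsubmx N.
Proof. by apply/matrixP => i j; rewrite !mxE. Qed.
Lemma ur_aff (M N : 'M[R]_(p + q)) (t : R) : ursubmx (M + t *: N) = ursubmx M + t *: ursubmx N.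
Proof. by apply/matrixP => i j; rewrite !mxE. Qed.
Lemma dr_aff (M N : 'M[R]_(p + q)) (t : R) : drsubmx (M + t *: N) = drsubmx M + t *: drsubmx N.
Proof. by apply/matrixP => i j; rewrite !mxE. Qed.
Lemma tr_aff m n (M N : 'M[R]_(m, n)) (t : R) : (M + t *: N)^T = M^T + t *: N^T.
Proof. by apply/matrixP => i j; rewrite !mxE. Qed.

Lemma hX (X Y VX VY : 'M[R]_(p + q)) :
  is_derive (0:R) (1:R) (fun t => pi_X (curveX X VX t) (curveX Y VY t)) (ulsubmx VX).
Proof.
have -> : (fun t => pi_X (curveX X VX t) (curveX Y VY t)) =
   (fun t => ulsubmx X + t *: ulsubmx VX).
  by apply/funext => t; rewrite /pi_X /curveX ul_aff.
exact: is_derive_eq (is_derive_affine _ _ 0 1) (scale1r _).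
Qed.

Lemma hY (X Y VX VY : 'M[R]_(p + q)) :
  is_derive (0:R) (1:R) (fun t => pi_Y (curveX X VX t) (curveX Y VY t)) (ulsubmx VY).
Proof.
have -> : (fun t => pi_Y (curveX X VX t) (curveX Y VY t)) =
   (fun t => ulsubmx Y + t *: ulsubmx VY).
  by apply/funext => t; rewrite /pi_Y /curveX ul_aff.
exact: is_derive_eq (is_derive_affine _ _ 0 1) (scale1r _).
Qed.

Lemma hT (X Y VX VY : 'M[R]_(p + q)) : posdefmx Y -> symmx VY ->
  is_derive (0:R) (1:R) (fun t => pi_T (curveX X VX t) (curveX Y VY t))
    (drsubmx (conjL Y VY)).
Proof.
move=> pdY sVY; have uA := pd_unit (pd_ul pdY).
have [sA _ _] := symmx_blocks pdY.1.
have [_ _ eC] := symmx_blocks sVY.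
have sAi : (invmx (ulsubmx Y))^T = invmx (ulsubmx Y) by rewrite trmx_inv sA.
have -> : (fun t => pi_T (curveX X VX t) (curveX Y VY t)) =
   (fun t => drsubmx Y + t *: drsubmx VY) -
   (fun t => ((ursubmx Y)^T + t *: (ursubmx VY)^T) *m invmx (ulsubmx Y + t *: ulsubmx VY)
      *m (ursubmx Y + t *: ursubmx VY)).
  by apply/funext => t; rewrite /pi_T /pi2 /curveX ul_aff ur_aff dr_aff tr_aff.
apply: is_derive_eq.
  apply: is_deriveB; first exact: is_derive_affine.
  apply: is_derive_mulmx; last exact: is_derive_affine.
  apply: is_derive_mulmx; first exact: is_derive_affine.
  exact: is_derive_invmx.
rewrite !scale1r !scale0r !addr0 conjL_blocks block_mxKdr eC /Kof trmx_mul sAi trmxK.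
rewrite mulmxDl mulmxN mulNmx !mulmxA.
exact: ac5.
Qed.

End Main.

Lemma key_identity (R : realType) (p q : nat) (X Y VX VY : 'M[R]_(p + q)) :
  posdefmx Y -> symmx VY ->
  dpi_X X Y VX VY = ulsubmx VX -> dpi_Y X Y VX VY = ulsubmx VY ->
  dpi_T X Y VX VY = drsubmx (conjL Y VY) ->
  wp_inner Y VX VY VX VY = dpi_sqnorm X Y VX VY + wp_inner Y VX VY (kerX Y VX) (kerY Y VY).
Proof.
move=> pdY sVY eX eY eT.
rewrite /dpi_sqnorm eX eY eT /wp_inner /trwp_inner schur_pi2.
rewrite -/(tt Y VX VX) -/(tt Y VY VY) -/(tt Y VX (kerX Y VX)) -/(tt Y VY (kerY Y VY)).
rewrite (ttX VX pdY) (ttY VY pdY).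
set a := \tr _; set b := \tr _; set c := \tr _.
set kx := tt _ _ _; set ky := tt _ _ _.
rewrite !mulrDr !addrA; congr (_ + _).
by rewrite -!addrA; congr (_ + _); rewrite addrC -!addrA; congr (_ + _); rewrite addrC.
Qed.

Unset Implicit Arguments.

Theorem lemma3p11 (R : realType) (g' g'' : nat) :
  (0 < g'')%N ->
  forall X Y : 'M[R]_(g' + g''), siegel X Y ->
  pi_riemannian_submersion_at X Y.
Proof.
move=> _ X Y [sX pdY].
have eX VX VY : dpi_X X Y VX VY = ulsubmx VX.
  by rewrite /dpi_X derive1E; exact: (@derive_val _ _ _ _ _ _ _ (hX X Y VX VY)).
have eY VX VY : dpi_Y X Y VX VY = ulsubmx VY.
  by rewrite /dpi_Y derive1E; exact: (@derive_val _ _ _ _ _ _ _ (hY X Y VX VY)).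
have eT VX VY : symmx VY -> dpi_T X Y VX VY = drsubmx (conjL Y VY).
  by move=> sVY; rewrite /dpi_T derive1E; exact: (@derive_val _ _ _ _ _ _ _ (hT X VX pdY sVY)).
split.
- move=> VX VY _ sVY; split.
  + exact: (@ex_derive _ _ _ _ _ _ _ (hX X Y VX VY)).
  + exact: (@ex_derive _ _ _ _ _ _ _ (hY X Y VX VY)).
  + exact: (@ex_derive _ _ _ _ _ _ _ (hT X VX pdY sVY)).
- move=> WX WY WT sWX sWY sWT.
  have sB : symmx (block_mx WY 0 0 WT).
    by rewrite /symmx tr_block_mx !trmx0 sWY sWT.
  exists (block_mx WX 0 0 0), (Lm Y *m block_mx WY 0 0 WT *m (Lm Y)^T).
  have sVY := Lm_sym Y sB.
  split.
  + by rewrite /symmx tr_block_mx !trmx0 sWX.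
  + exact: sVY.
  + by rewrite eX block_mxKul.
  + by rewrite eY (ul_conjL' Y) conjL_Lm block_mxKul.
  + by rewrite (eT _ _ sVY) conjL_Lm block_mxKdr.
- move=> VX VY sVX sVY H.
  have := H (kerX Y VX) (kerY Y VY) (kerX_sym Y sVX) (kerY_sym Y sVY).
  rewrite eX eY (eT _ _ (kerY_sym Y sVY)) kerX_ul kerY_ul kerY_dr.
  move=> /(_ erefl erefl erefl) H0.
  by rewrite (key_identity pdY sVY (eX _ _) (eY _ _) (eT _ _ sVY)) H0 addr0.
- move=> VX VY sVX sVY.
  rewrite (key_identity pdY sVY (eX _ _) (eY _ _) (eT _ _ sVY)) lerDl.
  rewrite /wp_inner; apply: mulr_ge0; first by rewrite invr_ge0.
  by apply: addr_ge0; [exact: ttX_ge0 | exact: ttY_ge0].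
Qed.
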